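(* Let $A$ and $B$ be commutative groups. Then $B^A$ is a faithful $\mathbb{Z}_{e(B)}[A]$-module.
   Context: For commutative groups $A,B$, $B^A$ denotes the commutative group (under pointwise addition) of all maps $A\to B$. $\mathbb{Z}_n=\mathbb{Z}/n\mathbb{Z}$ ($\mathbb{Z}_0=\mathbb{Z}$); $e(B)=\exp(B)$ if $B$ has finite exponent and $e(B)=0$ otherwise. The module structure is $(\sum_a n_a[a])f=\sum_a n_a\tau_af$, where $(\tau_af)(x)=f(x+a)$. *)

(* Defs.v *)
From HB Require Import structures.
From mathcomp Require Import all_boot all_order all_algebra.
Set Implicit Arguments. Unset Strict Implicit. Unset Printing Implicit Defensive.
Import Order.TTheory GRing.Theory Num.Theory.
Local Open Scope ring_scope.

(* e(B): the exponent of B if B has finite exponent, and 0 otherwise.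
   [is_exponent B e] holds iff e = e(B). *)
Definition is_exponent (B : zmodType) (e : nat) : Prop :=
  ((0 < e)%N /\ (forall b : B, b *+ e = 0) /\
     (forall m : nat, (0 < m)%N -> (forall b : B, b *+ m = 0) -> (e <= m)%N))
  \/ (e = 0%N /\ ~ (exists m : nat, (0 < m)%N /\ forall b : B, b *+ m = 0)).

(* An element of the group ring Z_e[A] is written as a formal finite sum
   sum_i n_i [a_i], represented by the list of pairs (n_i, a_i) with
   integer coefficients (each class in Z_e lifted to Z). *)
Definition grp_elt (A : zmodType) := seq (int * A).

Definition coef (A : zmodType) (r : grp_elt A) (a : A) : int :=
  \sum_(p <- r | p.2 == a) p.1.

Definition zero_in_Ze (A : zmodType) (e : nat) (r : grp_elt A) : Prop :=
  forall a : A, (e%:Z %| coef r a)%Z.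

Definition tau (A B : zmodType) (a : A) (f : A -> B) : A -> B :=
  fun x => f (x + a).

Definition gact (A B : zmodType) (r : grp_elt A) (f : A -> B) : A -> B :=
  fun x => \sum_(p <- r) (tau p.2 f x) *~ p.1.

(* Main.v *)
Require Import Defs.
From HB Require Import structures.
From mathcomp Require Import all_boot all_order all_algebra.
Import Order.TTheory GRing.Theory Num.Theory.
Local Open Scope ring_scope.

Lemma gact_ind (A B : zmodType) (r : grp_elt A) (a : A) (b : B) :
  \sum_(p <- r) (if p.2 == a then b else 0) *~ p.1 = b *~ coef r a.
Proof.
rewrite /coef; elim: r => [|p r IH]; first by rewrite !big_nil mulr0z.
rewrite !big_cons IH; case: eqP => _; first by rewrite mulrzDr.
by rewrite mul0rz add0r.
Qed.

Lemma key (B : zmodType) (e : nat) (c : int) :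
  is_exponent B e -> (forall b : B, b *~ c = 0) -> (e%:Z %| c)%Z.
Proof.
move=> He Hc.
have Hm : forall b : B, b *+ `|c|%N = 0.
  move=> b; case: (intP c) Hc => [|n|n] Hc /=.
  - by [].
  - by have := Hc b.
  - have := Hc b; rewrite ?NegzE mulrNz => /eqP; rewrite oppr_eq0 => /eqP.
    by [].
rewrite /dvdz /=.
case: He => [[e0 [He Hmin]] | [-> Hne]].
- apply/dvdnP; exists (`|c|%N %/ e)%N.
  have := divn_eq `|c|%N e => Hd.
  case: (posnP (`|c|%N %% e)) => Hr; first by rewrite {1}Hd Hr addn0.
  exfalso.
  have : (e <= `|c|%N %% e)%N.
    apply: Hmin => // b.
    have := Hm b; rewrite {1}Hd mulrnDr mulnC mulrnA He mul0rn add0r //.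
  by rewrite leqNgt ltn_mod e0.
- case: (posnP `|c|%N) => Hc0; first by rewrite unfold_in /= dvd0n Hc0.
  by exfalso; apply: Hne; exists `|c|%N.
Qed.

Theorem lemma3p1 (A B : zmodType) (e : nat) (r : grp_elt A) :
  is_exponent B e ->
  (forall (f : A -> B) (x : A), gact r f x = 0) ->
  zero_in_Ze e r.
Proof.
move=> He H a; apply: (@key B e (coef r a) He) => b.
have := H (fun x => if x == a then b else 0) 0.
rewrite /gact /tau; under eq_bigr => p _ do rewrite add0r.
by rewrite gact_ind.
Qed.
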